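(* If $x \in \mathcal{A}_{\emptyset}$ satisfies $gx=h$ for some positive $g,h \in \mathcal{A}_{\emptyset}$ with $g \neq 0$, then $x$ is positive.
   Context: All graphs are finite and simple; $\emptyset$ denotes the graph with no vertices. For graphs $H,G$, $t(H;G)$ is the probability that a uniformly random map $V(H)\to V(G)$ is a homomorphism; $t(\emptyset;G)=1$. A partially labeled graph is a graph in which some vertices carry distinct positive-integer labels. $\mathcal{F}$ is the set of partially labeled graphs up to label-preserving isomorphism, and $\mathcal{F}_L$ those whose label set is exactly the finite set $L\subset\mathbb{N}$. The product $H_1\cdot H_2$ is the disjoint union with equally labeled vertices identified (multiple edges merged). $\mathbb{R}[\mathcal{F}]$ is the algebra of finite formal real linear combinations of elements of $\mathcal{F}$ with this product extended bilinearly, and $\mathbb{R}[\mathcal{F}_L]$ the subalgebra spanned by $\mathcal{F}_L$. For $H\in\mathcal{F}_L$, a graph $G$ and $\phi:L\to V(G)$, $t(H;G,\phi)$ is the probability that the map sending each labeled vertex with label $\ell$ to $\phi(\ell)$ and each unlabeled vertex to an independent uniform random vertex of $G$ is a homomorphism; this is extended linearly. Let $\mathcal{K}$ be the ideal of $\mathbb{R}[\mathcal{F}]$ generated by $F-\emptyset$ for $F$ a one-vertex (labeled or unlabeled) graph; $\mathcal{A}=\mathbb{R}[\mathcal{F}]/\mathcal{K}$, $\mathcal{A}_L=\mathbb{R}[\mathcal{F}_L]/(\mathcal{K}\cap\mathbb{R}[\mathcal{F}_L])$. An element $f\in\mathcal{A}_L$ is positive if $t(f;G,\phi)\ge0$ for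 all graphs $G$ and all $\phi:L\to V(G)$; in particular $f\in\mathcal{A}_\emptyset$ is positive iff $t(f;G)\ge 0$ for every graph $G$. *)

(* Defs.v *)
From mathcomp Require Import all_boot all_order all_algebra all_fingroup.
From mathcomp Require Import reals.
From Stdlib Require List.
Set Implicit Arguments. Unset Strict Implicit. Unset Printing Implicit Defensive.
Import Order.TTheory GRing.Theory Num.Theory.
Local Open Scope ring_scope.

(* Vertices are 0 .. nv-1.  The edge set is the simple graph given by
   [edgeb] (symmetrised, loopless, restricted to the vertex range).
   [lab u = Some l] means vertex u carries label l; [None] = unlabeled. *)
Record plg := PLG { nv : nat; adj : nat -> nat -> bool; lab : nat -> option nat }.

Definition edgeb (H : plg) (u v : nat) : bool :=
  [&& (u < nv H)%N, (v < nv H)%N, u != v & adj H u v || adj H v u].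

Definition wf (H : plg) : Prop :=
  (forall u l, (u < nv H)%N -> lab H u = Some l -> (0 < l)%N) /\
  (forall u v, (u < nv H)%N -> (v < nv H)%N -> lab H u != None ->
      lab H u = lab H v -> u = v).

(* element of F_emptyset : no labeled vertex *)
Definition unlabeled (H : plg) : Prop := forall u, (u < nv H)%N -> lab H u = None.

Definition isob (H J : plg) : bool :=
  (nv H == nv J) &&
  [exists f : {perm 'I_(nv H)},
     [forall u : 'I_(nv H), (lab J (f u) == lab H u) &&
        [forall v : 'I_(nv H), edgeb J (f u) (f v) == edgeb H u v]]].

Definition haslab (H : plg) (l : nat) : bool :=
  has (fun u => lab H u == Some l) (iota 0 (nv H)).

(* ---------- product H1 . H2 : disjoint union, equally labeled vertices
   identified, multiple edges merged ---------- *)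
Definition newv (H1 H2 : plg) (u : nat) : bool :=
  if lab H2 u is Some l then ~~ haslab H1 l else true.
Definition news (H1 H2 : plg) : seq nat := [seq u <- iota 0 (nv H2) | newv H1 H2 u].
(* position in the product of vertex u of H2 *)
Definition posv (H1 H2 : plg) (u : nat) : nat :=
  if newv H1 H2 u then (nv H1 + index u (news H1 H2))%N
  else find (fun w => lab H1 w == lab H2 u) (iota 0 (nv H1)).
Definition gmul (H1 H2 : plg) : plg :=
  PLG (nv H1 + size (news H1 H2))
      (fun a b => [&& (a < nv H1)%N, (b < nv H1)%N & adj H1 a b] ||
         has (fun u => has (fun v => [&& adj H2 u v, posv H1 H2 u == a &
                                        posv H1 H2 v == b]) (iota 0 (nv H2)))
             (iota 0 (nv H2)))
      (fun a => if (a < nv H1)%N then lab H1 a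
                else lab H2 (nth 0%N (news H1 H2) (a - nv H1))).

Definition g0 : plg := PLG 0 (fun _ _ => false) (fun _ => None).
Definition vtx (o : option nat) : plg := PLG 1 (fun _ _ => false) (fun _ => o).

Section Alg.
Context {R : realType}.

(* ---------- R[F] : finite formal real linear combinations ---------- *)
Definition fsum := seq (R * plg).
Definition inF (s : fsum) : Prop := forall p, List.In p s -> wf p.2.
Definition inF0 (s : fsum) : Prop := forall p, List.In p s -> wf p.2 /\ unlabeled p.2.

Definition coef (s : fsum) (J : plg) : R := \sum_(p <- s | isob p.2 J) p.1.
Definition eqF (s1 s2 : fsum) : Prop := forall J, wf J -> coef s1 J = coef s2 J.

Definition scaleF (c : R) (s : fsum) : fsum := [seq (c * p.1, p.2) | p <- s].
Definition subF (s1 s2 : fsum) : fsum := s1 ++ scaleF (-1) s2.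
Definition mulF (s1 s2 : fsum) : fsum :=
  [seq (p.1 * q.1, gmul p.2 q.2) | p <- s1, q <- s2].

(* membership in the ideal K generated by F - emptyset, F one-vertex:
   s = sum_i c_i H_i (F_i - emptyset) in R[F]. *)
Definition inK (s : fsum) : Prop :=
  exists gens : seq (R * plg * option nat),
    (forall q, List.In q gens -> wf q.1.2 /\ wf (vtx q.2)) /\
    eqF s (flatten [seq scaleF q.1.1
                      (subF (mulF [:: (1, q.1.2)] [:: (1, vtx q.2)])
                            (mulF [:: (1, q.1.2)] [:: (1, g0)])) | q <- gens]).

Definition homb (H : plg) (T : finType) (e : rel T)
  (f : {ffun 'I_(nv H) -> T}) : bool :=
  [forall u : 'I_(nv H), forall v : 'I_(nv H), edgeb H u v ==> e (f u) (f v)].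

Definition tdens (H : plg) (T : finType) (e : rel T) : R :=
  (#|[pred f : {ffun 'I_(nv H) -> T} | homb e f]|)%:R / (#|T| ^ nv H)%:R.

Definition tval (s : fsum) (T : finType) (e : rel T) : R :=
  \sum_(p <- s) p.1 * tdens p.2 e.

(* positivity in A_emptyset: t(f;G) >= 0 for every (nonempty, finite, simple) G *)
Definition positive (s : fsum) : Prop :=
  forall (T : finType) (e : rel T), symmetric e -> irreflexive e ->
    (0 < #|T|)%N -> 0 <= tval s e.

End Alg.

(* Main.v *)
Require Import Defs.
From mathcomp Require Import all_boot all_order all_algebra all_fingroup.
From mathcomp Require Import reals zify ring lra polyrcf.
Set Implicit Arguments. Unset Strict Implicit. Unset Printing Implicit Defensive.
Import Order.TTheory GRing.Theory Num.Theory.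
Local Open Scope ring_scope.

Definition homc (H : plg) (T : finType) (e : rel T) : nat :=
  #|[pred f : {ffun 'I_(nv H) -> T} | homb e f]|.

Lemma homc_ext (H J : plg) (T : finType) (e : rel T) :
  nv H = nv J -> (forall u v, (u < nv H)%N -> (v < nv H)%N -> edgeb J u v = edgeb H u v) ->
  homc J e = homc H e.
Proof.
case: H J => [n a l] [n' a' l'] /= E; subst n' => He.
apply: eq_card => f; rewrite !inE /homb.
apply: eq_forallb => u; apply: eq_forallb => v.
by rewrite He.
Qed.

Section Union.
Variables (nb nc : nat) (T : finType).
Definition joinf (f1 : {ffun 'I_nb -> T}) (f2 : {ffun 'I_nc -> T}) : {ffun 'I_(nb + nc) -> T} :=
  [ffun i => match split i with inl j => f1 j | inr k => f2 k end].
Definition lpart (f : {ffun 'I_(nb + nc) -> T}) : {ffun 'I_nb -> T} := [ffun j => f (lshift nc j)].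
Definition rpart (f : {ffun 'I_(nb + nc) -> T}) : {ffun 'I_nc -> T} := [ffun j => f (rshift nb j)].

Lemma joinfL f1 f2 j : joinf f1 f2 (lshift nc j) = f1 j.
Proof. by rewrite ffunE (unsplitK (inl _ j)). Qed.
Lemma joinfR f1 f2 j : joinf f1 f2 (rshift nb j) = f2 j.
Proof. by rewrite ffunE (unsplitK (inr _ j)). Qed.
Lemma joinf_part f : joinf (lpart f) (rpart f) = f.
Proof.
apply/ffunP => i; rewrite !ffunE; case: splitP => [j|k] /= Hi; rewrite ffunE;
  congr (fun_of_fin f _); apply: val_inj => /=; by rewrite Hi.
Qed.
Lemma joinf_inj : injective (fun p => joinf p.1 p.2).
Proof.
move=> [f1 f2] [g1 g2] /= E; congr pair; apply/ffunP => j.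
  by rewrite -(joinfL f1 f2) E joinfL.
by rewrite -(joinfR f1 f2) E joinfR.
Qed.
End Union.

Lemma hom_union (A B C : plg) (T : finType) (e : rel T) :
  nv A = (nv B + nv C)%N ->
  (forall a b, (a < nv B)%N -> (b < nv B)%N -> edgeb A a b = edgeb B a b) ->
  (forall a b, (a < nv C)%N -> (b < nv C)%N -> edgeb A (nv B + a) (nv B + b) = edgeb C a b) ->
  (forall a b, (a < nv B)%N -> (b < nv C)%N -> edgeb A a (nv B + b) = false /\ edgeb A (nv B + b) a = false) ->
  homc A e = (homc B e * homc C e)%N.
Proof.
case: A => [n a l] /= En; subst n => HB HC HX.
set A := PLG _ _ _.
have Hh : forall f1 f2, homb e (joinf f1 f2 : {ffun 'I_(nv A) -> T}) = homb e f1 && homb e f2.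
  move=> f1 f2; apply/idP/andP.
    move=> /forallP H; split; apply/forallP => u; apply/forallP => v; apply/implyP => Euv.
    - have := forallP (H (lshift (nv C) u)) (lshift (nv C) v).
      by rewrite /= HB // Euv !joinfL.
    - have := forallP (H (rshift (nv B) u)) (rshift (nv B) v).
      by rewrite /= HC // Euv !joinfR.
  move=> [/forallP H1 /forallP H2]; apply/forallP => u; apply/forallP => v; apply/implyP.
  rewrite !ffunE.
  case: splitP => [j|k] /= Hu; case: splitP => [j'|k'] /= Hv; rewrite Hu Hv.
  - by rewrite HB // => E; exact: (implyP (forallP (H1 j) j') E).
  - by rewrite (HX _ _ (ltn_ord j) (ltn_ord k')).1.
  - by rewrite (HX _ _ (ltn_ord j') (ltn_ord k)).2.
  - by rewrite HC // => E; exact: (implyP (forallP (H2 k) k') E).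
rewrite /homc.
have -> : #|[pred f : {ffun 'I_(nv A) -> T} | homb e f]| =
   #|[set joinf p.1 p.2 | p in setX [set f : {ffun 'I_(nv B) -> T} | homb e f] [set f : {ffun 'I_(nv C) -> T} | homb e f]]|.
  apply: eq_card => f; rewrite !inE; apply/idP/imsetP.
    move=> Hf; exists (lpart f, rpart f); last by rewrite joinf_part.
    by rewrite inE /= !inE -Hh joinf_part.
  by move=> [[f1 f2]]; rewrite inE /= !inE => Hf ->; rewrite Hh.
by rewrite (card_imset _ (@joinf_inj _ _ _)) cardsX !cardsE.
Qed.

Lemma homc_edgeless (H : plg) (T : finType) (e : rel T) :
  (forall u v, (u < nv H)%N -> (v < nv H)%N -> edgeb H u v = false) ->
  homc H e = (#|T| ^ nv H)%N.
Proof.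
move=> HE; rewrite /homc.
have -> : (#|T| ^ nv H)%N = #|{ffun 'I_(nv H) -> T}| by rewrite card_ffun card_ord.
apply: eq_card => f; rewrite !inE; apply/forallP => u; apply/forallP => v.
by rewrite HE.
Qed.
Definition surjb (m : nat) (T : finType) (f : {ffun 'I_m -> T}) : bool :=
  [forall y, exists x, f x == y].
Definition homcS (H : plg) (T : finType) (e : rel T) (b : bool) : nat :=
  #|[pred f : {ffun 'I_(nv H) -> T} | homb e f && (b ==> surjb f)]|.

Lemma isob_refl H : isob H H.
Proof.
apply/andP; split => //; apply/existsP; exists 1%g; apply/forallP => u.
rewrite perm1 eqxx /=; apply/forallP => v; by rewrite perm1.
Qed.

Lemma isob_sym H J : isob H J -> isob J H.
Proof.
case: H J => [n a l] [n' a' l']; rewrite /isob /=; case/andP => /eqP E; subst n'.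
move/existsP => [s /forallP Hs]; apply/andP; split => //.
apply/existsP; exists s^-1%g; apply/forallP => u.
have := Hs (s^-1 u)%g; rewrite permKV; case/andP => /eqP Hl /forallP He.
rewrite -Hl eqxx /=; apply/forallP => v.
by have := He (s^-1 v)%g; rewrite permKV => /eqP ->.
Qed.

Lemma isob_trans H J K : isob H J -> isob J K -> isob H K.
Proof.
case: H J K => [n a l] [n' a' l'] [n'' a'' l'']; rewrite /isob /=.
case/andP => /eqP E; subst n'; move/existsP => [s /forallP Hs].
case/andP => /eqP E; subst n''; move/existsP => [t /forallP Ht].
apply/andP; split => //; apply/existsP; exists (s * t)%g; apply/forallP => u.
have /andP[/eqP Hl1 /forallP He1] := Hs u.
have /andP[/eqP Hl2 /forallP He2] := Ht (s u).
rewrite permM Hl2 Hl1 eqxx /=; apply/forallP => v.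
by rewrite permM (eqP (He2 (s v))) (eqP (He1 v)).
Qed.

Lemma isob_id (A B : plg) : nv A = nv B ->
  (forall u, (u < nv A)%N -> lab B u = lab A u) ->
  (forall u v, (u < nv A)%N -> (v < nv A)%N -> edgeb B u v = edgeb A u v) -> isob A B.
Proof.
move=> E Hl He; apply/andP; split; first by rewrite E.
apply/existsP; exists 1%g; apply/forallP => u; rewrite perm1 Hl // eqxx /=.
by apply/forallP => v; rewrite perm1 He.
Qed.

Lemma isob_homcS (H J : plg) (T : finType) (e : rel T) b :
  isob H J -> homcS H e b = homcS J e b.
Proof.
case: H J => [n a l] [n' a' l']; rewrite /isob /=; case/andP => /eqP E; subst n'.
move/existsP => [s /forallP Hs].
set H := PLG n a l; set J := PLG n a' l'.
have Hed : forall u v : 'I_n, edgeb J (s u) (s v) = edgeb H u v.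
  by move=> u v; have /andP[_ /forallP He] := Hs u; apply/eqP; exact: He.
pose c (f : {ffun 'I_(nv J) -> T}) : {ffun 'I_(nv H) -> T} := [ffun u => f (s u)].
have cinj : injective c.
  move=> f g Efg; apply/ffunP => u; have := congr1 (fun h : {ffun 'I_n -> T} => h (s^-1 u)%g) Efg.
  by rewrite /= !ffunE permKV.
have Hc : forall f, homb e (c f) && (b ==> surjb (c f)) = homb e f && (b ==> surjb f).
  move=> f; congr andb.
    apply/forallP/forallP => Hf u.
      apply/forallP => v; have := forallP (Hf (s^-1 u)%g) (s^-1 v)%g.
      by rewrite !ffunE !permKV -Hed !permKV.
    apply/forallP => v; have := forallP (Hf (s u)) (s v).
    by rewrite !ffunE Hed.
  congr implb; apply/forallP/forallP => Hf y; have /existsP[x Hx] := Hf y.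
    by apply/existsP; exists (s x); rewrite ffunE in Hx.
  by apply/existsP; exists (s^-1 x)%g; rewrite ffunE permKV.
rewrite /homcS.
have -> : #|[pred f : {ffun 'I_(nv H) -> T} | homb e f && (b ==> surjb f)]| =
  #|[set c f | f in [set f : {ffun 'I_(nv J) -> T} | homb e f && (b ==> surjb f)]]|.
  apply: eq_card => g; rewrite !inE; apply/idP/imsetP.
    move=> Hg; exists [ffun u => g (s^-1 u)%g].
      rewrite inE -Hc.
      suff -> : c [ffun u => g (s^-1 u)%g] = g by [].
      by apply/ffunP => u; rewrite !ffunE permK.
    by apply/ffunP => u; rewrite !ffunE permK.
  by move=> [f]; rewrite inE => Hf ->; rewrite Hc.
by rewrite (card_imset _ cinj) cardsE.
Qed.

Lemma homc_homcS H (T : finType) (e : rel T) : homc H e = homcS H e false.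
Proof. by apply: eq_card => f; rewrite !inE andbT. Qed.

Lemma index_iota0 u n : (u < n)%N -> index u (iota 0 n) = u.
Proof.
move=> Hu; have E := nth_iota 0 0 Hu; rewrite add0n in E.
by rewrite -{1}E index_uniq ?size_iota ?iota_uniq.
Qed.

Section GmulNew.
Variables (H1 H2 : plg).
Hypothesis Hnew : forall u, (u < nv H2)%N -> newv H1 H2 u.

Lemma news_all : news H1 H2 = iota 0 (nv H2).
Proof. apply/all_filterP/allP => u; rewrite mem_iota add0n; exact: Hnew. Qed.

Lemma posv_new u : (u < nv H2)%N -> posv H1 H2 u = (nv H1 + u)%N.
Proof. by move=> Hu; rewrite /posv Hnew // news_all index_iota0. Qed.

Lemma gmul_nv : nv (gmul H1 H2) = (nv H1 + nv H2)%N.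
Proof. by rewrite /= news_all size_iota. Qed.

Lemma hsec_lo a b : (a < nv H1)%N ->
  has (fun u => has (fun v => [&& adj H2 u v, posv H1 H2 u == a & posv H1 H2 v == b])
      (iota 0 (nv H2))) (iota 0 (nv H2)) = false.
Proof.
move=> Ha; apply/negbTE/hasPn => u; rewrite mem_iota add0n => Hu.
apply/hasPn => v _; rewrite posv_new //.
have -> : (nv H1 + u == a) = false by apply/negbTE; rewrite neq_ltn; apply/orP; right; exact: ltn_addr.
by rewrite andFb andbF.
Qed.

Lemma hsec_lo2 a b : (b < nv H1)%N ->
  has (fun u => has (fun v => [&& adj H2 u v, posv H1 H2 u == a & posv H1 H2 v == b])
      (iota 0 (nv H2))) (iota 0 (nv H2)) = false.
Proof.
move=> Hb; apply/negbTE/hasPn => u; rewrite mem_iota add0n => Hu.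
apply/hasPn => v; rewrite mem_iota add0n => Hv; rewrite (posv_new Hv).
have -> : (nv H1 + v == b) = false by apply/negbTE; rewrite neq_ltn; apply/orP; right; exact: ltn_addr.
by rewrite !andbF.
Qed.

Lemma hsec_hi a b : (a < nv H2)%N -> (b < nv H2)%N ->
  has (fun u => has (fun v => [&& adj H2 u v, posv H1 H2 u == (nv H1 + a)%N & posv H1 H2 v == (nv H1 + b)%N])
      (iota 0 (nv H2))) (iota 0 (nv H2)) = adj H2 a b.
Proof.
move=> Ha Hb; apply/hasP/idP.
  move=> [u]; rewrite mem_iota add0n => Hu /hasP [v]; rewrite mem_iota add0n => Hv.
  by rewrite !posv_new // !eqn_add2l => /and3P[? /eqP <- /eqP <-].
move=> Hab; exists a; first by rewrite mem_iota add0n.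
apply/hasP; exists b; first by rewrite mem_iota add0n.
by rewrite !posv_new // !eqxx Hab.
Qed.

Lemma gmul_edgeL a b : (a < nv H1)%N -> (b < nv H1)%N ->
  edgeb (gmul H1 H2) a b = edgeb H1 a b.
Proof.
move=> Ha Hb; rewrite /edgeb gmul_nv /= !hsec_lo // !orbF Ha Hb !ltn_addr //=.
Qed.

Lemma gmul_edgeR a b : (a < nv H2)%N -> (b < nv H2)%N ->
  edgeb (gmul H1 H2) (nv H1 + a) (nv H1 + b) = edgeb H2 a b.
Proof.
move=> Ha Hb; rewrite /edgeb gmul_nv /= !hsec_hi // !ltn_add2l Ha Hb eqn_add2l /=.
by rewrite !(ltnNge (nv H1 + _)) !leq_addr.
Qed.

Lemma gmul_edgeX a b : (a < nv H1)%N -> (b < nv H2)%N ->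
  edgeb (gmul H1 H2) a (nv H1 + b) = false /\ edgeb (gmul H1 H2) (nv H1 + b) a = false.
Proof.
move=> Ha Hb; rewrite /edgeb /= hsec_lo // hsec_lo2 //.
by rewrite !(ltnNge (nv H1 + _)) !leq_addr /= !andbF.
Qed.

Lemma gmul_homc (T : finType) (e : rel T) :
  homc (gmul H1 H2) e = (homc H1 e * homc H2 e)%N.
Proof.
apply: hom_union; first exact: gmul_nv.
- exact: gmul_edgeL.
- exact: gmul_edgeR.
- exact: gmul_edgeX.
Qed.

End GmulNew.

Lemma tdensE (R : realType) (H : plg) (T : finType) (e : rel T) :
  @tdens R H T e = (homc H e)%:R / (#|T| ^ nv H)%:R.
Proof. by []. Qed.

Lemma tdens_isob (R : realType) H J (T : finType) (e : rel T) :
  isob H J -> @tdens R H T e = @tdens R J T e.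
Proof.
move=> HJ; rewrite !tdensE !homc_homcS (isob_homcS _ _ HJ).
by case/andP: HJ => /eqP ->.
Qed.

Lemma homc_vtx o (T : finType) (e : rel T) : homc (vtx o) e = #|T|.
Proof.
rewrite homc_edgeless /= ?expn1 // => u v; rewrite /edgeb /= !ltnS !leqn0.
by move=> /eqP -> /eqP ->.
Qed.

Lemma homc_g0 (T : finType) (e : rel T) : homc g0 e = 1%N.
Proof. by rewrite homc_edgeless. Qed.

Lemma gmul_g0_isob H : isob (gmul H g0) H.
Proof.
apply: isob_sym; apply: isob_id.
- by rewrite /= addn0.
- by move=> u Hu; rewrite /= Hu.
- move=> u v Hu Hv; rewrite /edgeb /= addn0 Hu Hv /=.
  by rewrite !orbF.
Qed.

Lemma news_vtx H o : news H (vtx o) = if newv H (vtx o) 0 then [:: 0%N] else [::].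
Proof. by rewrite /news /=; case: newv. Qed.

Lemma gmul_vtx_old H o : newv H (vtx o) 0 = false -> isob (gmul H (vtx o)) H.
Proof.
move=> Hn; apply: isob_sym; apply: isob_id.
- by rewrite /= news_vtx Hn addn0.
- by move=> u Hu; rewrite /= Hu.
- move=> u v Hu Hv; rewrite /edgeb /= news_vtx Hn addn0 Hu Hv /=.
  by rewrite !orbF.
Qed.

Lemma tdens_gen (R : realType) H o (T : finType) (e : rel T) : (0 < #|T|)%N ->
  @tdens R (gmul H (vtx o)) T e = @tdens R H T e /\ @tdens R (gmul H g0) T e = @tdens R H T e.
Proof.
move=> T0; split; last first.
  by apply: tdens_isob; apply: gmul_g0_isob.
case Hn: (newv H (vtx o) 0); last by apply: tdens_isob; apply: gmul_vtx_old.
have Hnew : forall u, (u < nv (vtx o))%N -> newv H (vtx o) u.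
  by move=> u; rewrite /= ltnS leqn0 => /eqP ->.
rewrite !tdensE (gmul_homc Hnew) (gmul_nv Hnew) homc_vtx /= expnD expn1 !natrM.
rewrite invfM mulrACA divff ?mulr1 // pnatr_eq0 -lt0n //.
Qed.

Lemma unl_wf H : unlabeled H -> wf H.
Proof.
move=> Hu; split; first by move=> u l Hl; rewrite Hu.
by move=> u v Hl _; rewrite Hu.
Qed.

Lemma news_lt H1 H2 i : (i < size (news H1 H2))%N -> (nth 0%N (news H1 H2) i < nv H2)%N.
Proof.
move=> Hi; have := mem_nth 0%N Hi; rewrite /news mem_filter mem_iota add0n.
by case/andP.
Qed.

Lemma gmul_unl H1 H2 : unlabeled H1 -> unlabeled H2 -> unlabeled (gmul H1 H2).
Proof.
move=> U1 U2 a /=; case: ifP => Ha Hlt; first exact: U1.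
apply: U2; apply: news_lt; rewrite ltn_subLR //.
by rewrite leqNgt Ha.
Qed.

Lemma wf_gmul_g0 H : wf H -> wf (gmul H g0).
Proof.
move=> [W1 W2]; split => /=.
- by move=> u l; rewrite addn0 => Hu; rewrite Hu; exact: W1.
- by move=> u v; rewrite addn0 => Hu Hv; rewrite Hu Hv; exact: W2.
Qed.

Lemma wf_gmul_vtx H o : wf H -> wf (vtx o) -> wf (gmul H (vtx o)).
Proof.
move=> [W1 W2] [V1 _]; case Hn: (newv H (vtx o) 0).
  have Env : nv (gmul H (vtx o)) = (nv H).+1 by rewrite /= news_vtx Hn addn1.
  have Lab : forall a, (a < (nv H).+1)%N -> lab (gmul H (vtx o)) a =
                     if (a < nv H)%N then lab H a else o by move=> a _.
  have Lt : forall a, (a < (nv H).+1)%N -> ~~ (a < nv H)%N -> a = nv H.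
    by move=> a; rewrite ltnS leq_eqVlt => /orP[/eqP ->|->].
  split; rewrite Env.
    move=> u l Hu; rewrite Lab //; case: ifP => Hu'; first exact: W1.
    by move=> Ho; apply: (V1 0%N l) => //.
  move=> u v Hu Hv; rewrite !Lab //.
  case: ifP => Hu'; case: ifP => Hv'.
  - exact: W2.
  - move=> Hl Eo; exfalso; rewrite Eo in Hl; move: Hn Hl; rewrite /newv /=.
    case: o V1 Lab Env Eo => [l|] _ _ _ Eo' //= Hn' _.
    move/negP: Hn'; apply; apply/hasP; exists u; first by rewrite mem_iota add0n.
    by rewrite Eo'.
  - move=> Hl Eo; exfalso; move: Hn Hl; rewrite /newv /=.
    case: o V1 Lab Env Eo => [l|] _ _ _ Eo' //= Hn' _.
    move/negP: Hn'; apply; apply/hasP; exists v; first by rewrite mem_iota add0n.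
    by rewrite -Eo'.
  - by move=> _ _; rewrite (Lt u) ?Hu' // (Lt v) ?Hv'.
have Env : nv (gmul H (vtx o)) = nv H by rewrite /= news_vtx Hn addn0.
split; rewrite Env => /=.
- by move=> u l Hu; rewrite Hu; exact: W1.
- by move=> u v Hu Hv; rewrite Hu Hv; exact: W2.
Qed.

Section TvalLin.
Variables (R : realType) (T : finType) (e : rel T).

Lemma tval_cat (s1 s2 : @fsum R) : Defs.tval (cat s1 s2) e = Defs.tval s1 e + Defs.tval s2 e.
Proof. by rewrite /Defs.tval big_cat. Qed.

Lemma tval_scale c (s : @fsum R) : Defs.tval (scaleF c s) e = c * Defs.tval s e.
Proof.
rewrite /Defs.tval big_map mulr_sumr; apply: eq_bigr => p _ /=; by rewrite mulrA.
Qed.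

Lemma tval_sub (s1 s2 : @fsum R) : Defs.tval (subF s1 s2) e = Defs.tval s1 e - Defs.tval s2 e.
Proof. by rewrite /subF tval_cat tval_scale mulN1r. Qed.

Lemma tdens_mul_unl H1 H2 : unlabeled H2 ->
  @tdens R (gmul H1 H2) T e = @tdens R H1 T e * @tdens R H2 T e.
Proof.
move=> U2; have Hnew : forall u, (u < nv H2)%N -> newv H1 H2 u by move=> u Hu; rewrite /newv U2.
rewrite !tdensE (gmul_homc Hnew) (gmul_nv Hnew) expnD !natrM invfM mulrACA //.
Qed.

Lemma tval_mul (s1 s2 : @fsum R) : (forall q, List.In q s2 -> unlabeled q.2) ->
  Defs.tval (mulF s1 s2) e = Defs.tval s1 e * Defs.tval s2 e.
Proof.
move=> U; rewrite /Defs.tval /mulF big_allpairs_dep /= big_distrl /=.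
apply: eq_bigr => p _; rewrite big_distrr /=.
elim: s2 U => [|q s2 IH] U; first by rewrite !big_nil.
rewrite !big_cons IH; last by move=> r Hr; apply: U; right.
congr (_ + _); rewrite tdens_mul_unl; last by apply: U; left.
by rewrite mulrACA.
Qed.

End TvalLin.

Section Group.
Variable R : realType.

Lemma big_In (I : Type) (s : seq I) (F G : I -> R) :
  (forall x, List.In x s -> F x = G x) -> \sum_(x <- s) F x = \sum_(x <- s) G x.
Proof.
elim: s => [|x s IH] H; first by rewrite !big_nil.
by rewrite !big_cons H ?IH //; [move=> y Hy; apply: H; right | left].
Qed.

Lemma count_In_pos (I : Type) (P : pred I) s x : List.In x s -> P x -> (0 < count P s)%N.
Proof.
elim: s => [|y s IH] //= [E|Hx] Px; first by rewrite E Px.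
by rewrite addnC ltn_addr // IH.
Qed.

Lemma sum_if_const (I : Type) (S : seq I) (P : pred I) (c : R) :
  \sum_(q <- S) (if P q then c else 0) = c * (count P S)%:R.
Proof.
elim: S => [|x S IH]; first by rewrite big_nil mulr0.
rewrite big_cons IH /= natrD mulrDr; case: (P x) => /=; by rewrite ?mulr1 ?mulr0 ?add0r.
Qed.

Definition cnt (S : @fsum R) (J : plg) : nat := count (fun r : R * plg => isob r.2 J) S.

Lemma cnt_eq S H J : isob H J -> cnt S J = cnt S H.
Proof.
move=> HJ; apply: eq_count => r /=; apply/idP/idP => Hr.
  exact: (isob_trans Hr (isob_sym HJ)).
exact: (isob_trans Hr HJ).
Qed.

Variable phi : plg -> R.
Hypothesis Hphi : forall H J, isob H J -> phi H = phi J.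

Lemma group (s S : @fsum R) : (forall p, List.In p s -> List.In p S) ->
  \sum_(p <- s) p.1 * phi p.2 = \sum_(q <- S) coef s q.2 * phi q.2 / (cnt S q.2)%:R.
Proof.
move=> sub.
transitivity (\sum_(q <- S) \sum_(p <- s) (if isob p.2 q.2 then p.1 * (phi q.2 / (cnt S q.2)%:R) else 0)); last first.
  apply: eq_bigr => q _; rewrite /coef -[in RHS]mulrA [in RHS]big_distrl /= [in RHS]big_mkcond /=.
  by apply: eq_bigr => p _; case: ifP; rewrite ?mul0r.
rewrite exchange_big /=; apply: big_In => p Hp; symmetry.
transitivity (\sum_(q <- S) (if isob p.2 q.2 then p.1 * (phi p.2 / (cnt S p.2)%:R) else 0)).
  apply: eq_bigr => q _; case: ifP => // Hpq.
  by rewrite (Hphi Hpq) (cnt_eq _ Hpq).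
rewrite sum_if_const.
have -> : count (fun q : R * plg => isob p.2 q.2) S = cnt S p.2.
  apply: eq_count => r /=; apply/idP/idP; exact: isob_sym.
have Hc : (cnt S p.2)%:R != 0 :> R.
  rewrite pnatr_eq0 -lt0n; apply: (count_In_pos (sub _ Hp)); exact: isob_refl.
by rewrite -!mulrA mulVf // mulr1.
Qed.

End Group.

Lemma In_cat (I : Type) (x : I) s1 s2 : List.In x (s1 ++ s2) <-> List.In x s1 \/ List.In x s2.
Proof. by split; [apply: List.in_app_or | apply: List.in_or_app]. Qed.

Lemma tval_eqF (R : realType) (s1 s2 : @fsum R) (T : finType) (e : rel T) :
  (forall p, List.In p s1 -> wf p.2) -> (forall p, List.In p s2 -> wf p.2) ->
  eqF s1 s2 -> Defs.tval s1 e = Defs.tval s2 e.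
Proof.
move=> W1 W2 E.
have Hphi : forall H J, isob H J -> (fun H => @tdens R H T e) H = (fun H => @tdens R H T e) J.
  by move=> H J; exact: tdens_isob.
rewrite /Defs.tval (group Hphi (S := s1 ++ s2)); last by move=> p Hp; apply/In_cat; left.
rewrite (group Hphi (s := s2) (S := s1 ++ s2)); last by move=> p Hp; apply/In_cat; right.
apply: big_In => q /In_cat Hq; rewrite E //.
by case: Hq; [apply: W1 | apply: W2].
Qed.

Definition genexpr (R : realType) (gens : seq (R * plg * option nat)) : @fsum R :=
  flatten [seq scaleF q.1.1
                      (subF (mulF [:: (1, q.1.2)] [:: (1, vtx q.2)])
                            (mulF [:: (1, q.1.2)] [:: (1, g0)])) | q <- gens].

Lemma genexpr_cons (R : realType) q (gens : seq (R * plg * option nat)) :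
  genexpr (q :: gens) = [:: (q.1.1 * (1 * 1), gmul q.1.2 (vtx q.2));
                           (q.1.1 * (-1 * (1 * 1)), gmul q.1.2 g0)] ++ genexpr gens.
Proof. by []. Qed.

Lemma genexpr_wf (R : realType) (gens : seq (R * plg * option nat)) :
  (forall q, List.In q gens -> wf q.1.2 /\ wf (vtx q.2)) ->
  forall p, List.In p (genexpr gens) -> wf p.2.
Proof.
elim: gens => [|q gens IH] Hg p //; rewrite genexpr_cons => /In_cat [Hp|Hp].
  have [W1 W2] := Hg q (or_introl erefl).
  case: Hp => [<-|[<-|//]] /=; [exact: wf_gmul_vtx | exact: wf_gmul_g0].
by apply: IH => // r Hr; apply: Hg; right.
Qed.

Lemma genexpr_tval (R : realType) (gens : seq (R * plg * option nat)) (T : finType) (e : rel T) :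
  (0 < #|T|)%N -> Defs.tval (genexpr gens) e = 0.
Proof.
move=> T0; elim: gens => [|q gens IH]; first by rewrite /Defs.tval big_nil.
rewrite genexpr_cons tval_cat IH addr0 /Defs.tval !big_cons big_nil /=.
have [-> ->] := @tdens_gen R q.1.2 q.2 T e T0.
by rewrite !mulr1 addr0 mulrN1 mulNr subrr.
Qed.

Lemma In_allpairs (A B C : Type) (f : A -> B -> C) s1 s2 p :
  List.In p [seq f a b | a <- s1, b <- s2] ->
  exists a b, List.In a s1 /\ List.In b s2 /\ p = f a b.
Proof.
elim: s1 => [|a s1 IH] //= /In_cat [Hp|Hp].
  have [b [<- Hb]] := proj1 (List.in_map_iff _ _ _) Hp.
  by exists a, b; split; [left|].
have [a' [b [Ha [Hb ->]]]] := IH Hp.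
by exists a', b; split; [right|].
Qed.

Lemma prod_identity (R : realType) (x g h : @fsum R) :
  inF0 x -> inF0 g -> inF0 h -> inK (subF (mulF g x) h) ->
  forall (T : finType) (e : rel T), (0 < #|T|)%N ->
  Defs.tval g e * Defs.tval x e = Defs.tval h e.
Proof.
move=> Ix Ig Ih [gens [Hg E]] T e T0.
have W : forall p, List.In p (subF (mulF g x) h) -> wf p.2.
  move=> p /In_cat [Hp|Hp].
    have [a [b [Ha [Hb ->]]]] := In_allpairs Hp.
    by apply: unl_wf; apply: gmul_unl; [exact: (Ig _ Ha).2 | exact: (Ix _ Hb).2].
  have [q [<- Hq]] := proj1 (List.in_map_iff _ _ _) Hp.
  exact: (Ih _ Hq).1.
have := tval_eqF e W (genexpr_wf Hg) E.
rewrite genexpr_tval // tval_sub tval_mul; last by move=> q Hq; exact: (Ix _ Hq).2.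
by move/eqP; rewrite subr_eq0 => /eqP.
Qed.

Lemma homc_embed (H : plg) (T' T'' : finType) (e' : rel T') (e'' : rel T'')
  (i : T' -> T'') (P : pred T'') :
  injective i -> (forall x y, e'' (i x) (i y) = e' x y) -> (forall x, P (i x)) ->
  (forall y, P y -> exists x, i x = y) ->
  #|[pred f : {ffun 'I_(nv H) -> T''} | homb e'' f && [forall u, P (f u)]]| = homc H e'.
Proof.
move=> inj He HP Hpre.
pose c (f : {ffun 'I_(nv H) -> T'}) : {ffun 'I_(nv H) -> T''} := [ffun u => i (f u)].
have cinj : injective c.
  move=> f g Efg; apply/ffunP => u.
  by have := congr1 (fun h : {ffun 'I_(nv H) -> T''} => h u) Efg; rewrite /= !ffunE => /inj.
have Hc : forall f, homb e'' (c f) = homb e' f.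
  move=> f; apply: eq_forallb => u; apply: eq_forallb => v; by rewrite !ffunE He.
transitivity #|[set c f | f in [set f : {ffun 'I_(nv H) -> T'} | homb e' f]]|.
  apply: eq_card => f; rewrite !inE; apply/andP/imsetP.
    move=> [Hh /forallP Hall].
    have [g Hg] := fin_all_exists (fun u => Hpre _ (Hall u)).
    have Ef : c (finfun g) = f by apply/ffunP => u; rewrite !ffunE Hg.
    by exists (finfun g); rewrite // inE -Hc Ef.
  move=> [f']; rewrite inE => Hf' ->; split; first by rewrite Hc.
  by apply/forallP => u; rewrite ffunE HP.
by rewrite (card_imset _ cinj) cardsE.
Qed.

Lemma card_all (I : finType) (A : pred I) : (#|A| == #|I|) = [forall x, A x].
Proof.
apply/eqP/forallP => [H x|H].
  have := cardC A; rewrite H -{2}(addn0 #|I|) => /eqP; rewrite eqn_add2l => /eqP /card0_eq.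
  by move=> /(_ x); rewrite !inE => /negbFE.
by apply: eq_card => x; rewrite !inE; apply: H.
Qed.

Lemma card_none (I : finType) (A : pred I) : (#|A| == 0%N) = [forall x, ~~ A x].
Proof.
apply/eqP/forallP => [H x|H].
  have := card0_eq H x; rewrite !inE /= => E; exact: negbT E.
apply: eq_card0 => x; rewrite !inE; exact: negbTE (H x).
Qed.

Section Blow.
Variables (T1 T : finType) (e1 : rel T1) (e : rel T).

Definition eB : rel (T1 + T)%type := fun a b =>
  match a, b with inl x, inl y => e1 x y | inr x, inr y => e x y | _, _ => false end.
Definition proj (a : nat) (y : ((T1 * 'I_a) + T)%type) : (T1 + T)%type :=
  match y with inl p => inl p.1 | inr t => inr t end.
Definition ea (a : nat) : rel ((T1 * 'I_a) + T)%type := fun u v => eB (proj u) (proj v).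
Arguments ea a : clear implicits.
Arguments proj a : clear implicits.
Definition isl (y : (T1 + T)%type) : bool := if y is inl _ then true else false.
Definition mB (n : nat) (phi : {ffun 'I_n -> (T1 + T)%type}) : nat := #|[pred u | isl (phi u)]|.

Lemma card_fiber a (z : (T1 + T)%type) :
  #|[pred y : ((T1 * 'I_a) + T)%type | proj a y == z]| = if isl z then a else 1%N.
Proof.
case: z => [x|t] /=.
  rewrite -[RHS](card_ord a) -(card_imset _ (f := fun i : 'I_a => (inl (x, i) : ((T1 * 'I_a) + T)%type))); last first.
    by move=> i j [].
  apply: eq_card => y; rewrite !inE; apply/idP/imsetP.
    by case: y => [[x' i]|t] //= /eqP [->]; exists i.
  by move=> [i _ ->].
rewrite -(card1 (inr t : ((T1 * 'I_a) + T)%type)); apply: eq_card => y; rewrite !inE.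
by case: y => [[x' i]|t'] //=.
Qed.

Lemma blow_homc (a : nat) (H : plg) :
  homc H (ea a) = (\sum_(phi : {ffun 'I_(nv H) -> (T1 + T)%type} | homb eB phi) a ^ mB phi)%N.
Proof.
pose pj (f : {ffun 'I_(nv H) -> ((T1 * 'I_a) + T)%type}) : {ffun 'I_(nv H) -> (T1 + T)%type} :=
  [ffun u => proj a (f u)].
have Hh : forall f, homb (ea a) f = homb eB (pj f).
  by move=> f; apply: eq_forallb => u; apply: eq_forallb => v; rewrite !ffunE.
rewrite /homc -sum1_card (partition_big pj (homb eB)); last by move=> f; rewrite inE Hh.
apply: eq_bigr => phi Hphi.
transitivity #|family (fun u => [pred y : ((T1 * 'I_a) + T)%type | proj a y == phi u])|.
  rewrite sum1dep_card; apply: eq_card => f; rewrite !inE Hh.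
  apply/andP/familyP.
    by move=> [_ /eqP <-] u; rewrite !inE ffunE.
  move=> Hf; have Ep : pj f = phi by apply/ffunP => u; rewrite ffunE; apply/eqP; exact: Hf.
  by rewrite Ep.
rewrite card_family foldrE big_map big_enum /=.
rewrite /mB -prod_nat_const [RHS]big_mkcond /=.
by apply: eq_bigr => u _; rewrite card_fiber inE.
Qed.

Variable R : realType.

Definition PF (H : plg) : {poly R} :=
  \sum_(phi : {ffun 'I_(nv H) -> (T1 + T)%type} | homb eB phi) 'X^(mB phi).

Lemma PF_horner H (a : nat) : (PF H).[a%:R] = (homc H (ea a))%:R.
Proof.
rewrite /PF horner_sum blow_homc natr_sum; apply: eq_bigr => phi _.
by rewrite hornerXn natrX.
Qed.

Lemma PF_size H : (size (PF H) <= (nv H).+1)%N.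
Proof.
rewrite /PF; apply: leq_trans (size_sum _ _ _) _.
apply/bigmax_leqP_seq => phi _ _; rewrite size_polyXn ltnS.
by rewrite /mB; apply: leq_trans (max_card _) _; rewrite card_ord.
Qed.

Lemma sum_bool_card (I : finType) (P Q : pred I) :
  (\sum_(i | P i) (Q i : nat))%N = #|[pred i | P i && Q i]|.
Proof.
rewrite -sum1_card big_mkcondr /=; apply: eq_bigr => i _; by case: (Q i).
Qed.

Lemma PF_coef0 H : (PF H)`_0 = (homc H e)%:R.
Proof.
rewrite /PF coef_sum.
under eq_bigr do rewrite coefXn.
rewrite -natr_sum sum_bool_card.
congr (_%:R).
rewrite -(@homc_embed H _ _ e eB (@inr T1 T) (fun y => ~~ isl y)) //.
- apply: eq_card => phi; rewrite !inE; congr andb.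
  by rewrite eq_sym card_none; apply: eq_forallb => u; rewrite !inE.
- by move=> x y [].
- by move=> [y|y] // _; exists y.
Qed.

Lemma PF_coefn H : (PF H)`_(nv H) = (homc H e1)%:R.
Proof.
rewrite /PF coef_sum.
under eq_bigr do rewrite coefXn.
rewrite -natr_sum sum_bool_card.
congr (_%:R).
rewrite -(@homc_embed H _ _ e1 eB (@inl T1 T) isl) //.
- apply: eq_card => phi; rewrite !inE; congr andb.
  have E := card_all [pred u : 'I_(nv H) | isl (phi u)]; rewrite card_ord in E.
  rewrite eq_sym /mB E; apply: eq_forallb => u; by rewrite !inE.
- by move=> x y [].
- by move=> [y|y] // _; exists y.
Qed.

End Blow.

Lemma coefM_top (R : realType) (p q : {poly R}) i j :
  (size p <= i.+1)%N -> (size q <= j.+1)%N -> (p * q)`_(i + j) = p`_i * q`_j.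
Proof.
move=> Hp Hq; rewrite coefM.
have Hi : (i < (i + j).+1)%N by rewrite ltnS leq_addr.
rewrite (bigD1 (Ordinal Hi)) //= addKn big1 ?addr0 // => k Hk.
have : (k : nat) != i by move: Hk; apply: contra => /eqP E; apply/eqP; apply: val_inj.
rewrite neq_ltn => /orP[Hlt|Hgt].
  rewrite [q`_ _]nth_default ?mulr0 //; apply: leq_trans Hq _.
  lia.
by rewrite [p`_ _]nth_default ?mul0r //; apply: leq_trans Hp _.
Qed.

Section Qpoly.
Variables (T1 T : finType) (e1 : rel T1) (e : rel T) (R : realType).
Hypothesis T0 : (0 < #|T|)%N.

Definition Lp : {poly R} := (#|T1|%:R) *: 'X + (#|T|%:R)%:P.
Definition Qp (s : @fsum R) (K : nat) : {poly R} :=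
  \sum_(p <- s) p.1 *: (PF e1 e R p.2 * Lp ^+ (K - nv p.2)).

Lemma Lp_size : (size Lp <= 2)%N.
Proof.
rewrite /Lp; apply: leq_trans (size_polyD _ _) _; rewrite geq_max.
apply/andP; split; first by apply: leq_trans (size_scale_leq _ _) _; rewrite size_polyX.
by apply: leq_trans (size_polyC_leq1 _) _.
Qed.

Lemma Lp_coef0 : Lp`_0 = #|T|%:R.
Proof. by rewrite /Lp coefD coefZ coefX coefC /= mulr0 add0r. Qed.
Lemma Lp_coef1 : Lp`_1 = #|T1|%:R.
Proof. by rewrite /Lp coefD coefZ coefX coefC /= mulr1 addr0. Qed.

Lemma Lp_pow m : (size (Lp ^+ m) <= m.+1)%N /\ (Lp ^+ m)`_m = #|T1|%:R ^+ m /\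
                 (Lp ^+ m)`_0 = #|T|%:R ^+ m.
Proof.
elim: m => [|m [IHs [IHm IH0]]].
  by rewrite !expr0 size_poly1 coef1 /=.
split; last split.
- rewrite exprSr; apply: leq_trans (size_mul_leq _ _) _.
  have := Lp_size; lia.
- by rewrite exprSr -addn1 (coefM_top IHs Lp_size) IHm Lp_coef1 -exprSr addn1.
- by rewrite exprSr coef0M IH0 Lp_coef0 exprSr.
Qed.

Lemma Qp_horner (s : @fsum R) K (a : nat) :
  (forall p, List.In p s -> (nv p.2 <= K)%N) ->
  (Qp s K).[a%:R] = (#|T1| * a + #|T|)%:R ^+ K * Defs.tval s (@ea T1 T e1 e a).
Proof.
move=> HK; rewrite /Qp horner_sum /Defs.tval mulr_sumr; apply: big_In => p Hp.
rewrite hornerZ hornerM PF_horner horner_exp /Lp hornerD hornerZ hornerX hornerC tdensE.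
rewrite card_sum card_prod card_ord natrX.
set N : R := (#|T1| * a + #|T|)%:R.
have -> : #|T1|%:R * a%:R + #|T|%:R = N by rewrite /N natrD natrM.
have N0 : N != 0.
  by rewrite /N pnatr_eq0 -lt0n; apply: leq_trans T0 _; rewrite leq_addl.
rewrite -{2}(subnK (HK p Hp)) exprD.
have Nk : N ^+ nv p.2 != 0 by exact: expf_neq0.
by field.
Qed.

Lemma Qp_size (s : @fsum R) K : (forall p, List.In p s -> (nv p.2 <= K)%N) ->
  (size (Qp s K) <= K.+1)%N.
Proof.
rewrite /Qp; elim: s => [|p s IH] HK; first by rewrite big_nil size_poly0.
rewrite big_cons; apply: leq_trans (size_polyD _ _) _; rewrite geq_max; apply/andP; split.
  apply: leq_trans (size_scale_leq _ _) _; apply: leq_trans (size_mul_leq _ _) _.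
  have H1 := PF_size e1 e R p.2; have [H2 _] := Lp_pow (K - nv p.2).
  have H3 := HK p (or_introl erefl); lia.
by apply: IH => q Hq; apply: HK; right.
Qed.

Lemma Qp_coefK (s : @fsum R) K : (forall p, List.In p s -> (nv p.2 <= K)%N) ->
  (0 < #|T1|)%N -> (Qp s K)`_K = #|T1|%:R ^+ K * Defs.tval s e1.
Proof.
move=> HK T10; rewrite /Qp coef_sum /Defs.tval mulr_sumr; apply: big_In => p Hp.
have Hk := HK p Hp; have [H2 [H3 _]] := Lp_pow (K - nv p.2).
have E1 : (PF e1 e R p.2 * Lp ^+ (K - nv p.2))`_K =
    (PF e1 e R p.2)`_(nv p.2) * (Lp ^+ (K - nv p.2))`_(K - nv p.2).
  by rewrite -(coefM_top (PF_size e1 e R p.2) H2) subnKC.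
rewrite coefZ E1 PF_coefn H3 tdensE natrX.
set N : R := #|T1|%:R.
have N0 : N != 0 by rewrite /N pnatr_eq0 -lt0n.
rewrite -{2}(subnK Hk) exprD.
have Nk : N ^+ nv p.2 != 0 by exact: expf_neq0.
by field.
Qed.

Lemma Qp_coef0 (s : @fsum R) K : (forall p, List.In p s -> (nv p.2 <= K)%N) ->
  (Qp s K)`_0 = #|T|%:R ^+ K * Defs.tval s e.
Proof.
move=> HK; rewrite /Qp coef_sum /Defs.tval mulr_sumr; apply: big_In => p Hp.
have Hk := HK p Hp; have [_ [_ H3]] := Lp_pow (K - nv p.2).
rewrite coefZ coef0M PF_coef0 H3 tdensE natrX.
set N : R := #|T|%:R.
have N0 : N != 0 by rewrite /N pnatr_eq0 -lt0n.
rewrite -{2}(subnK Hk) exprD.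
have Nk : N ^+ nv p.2 != 0 by exact: expf_neq0.
by field.
Qed.

End Qpoly.

Definition Kmax (R : realType) (s : @fsum R) : nat := foldr (fun p m => maxn (nv p.2) m) 0%N s.

Lemma Kmax_ge (R : realType) (s : @fsum R) p : List.In p s -> (nv p.2 <= Kmax s)%N.
Proof.
elim: s => [|q s IH] //= [->|Hp]; first by rewrite leq_maxl.
by apply: leq_trans (IH Hp) _; rewrite leq_maxr.
Qed.

Lemma eB_sym (T1 T : finType) (e1 : rel T1) (e : rel T) :
  symmetric e1 -> symmetric e -> symmetric (eB e1 e).
Proof. by move=> S1 S [x|x] [y|y] //=. Qed.
Lemma eB_irr (T1 T : finType) (e1 : rel T1) (e : rel T) :
  irreflexive e1 -> irreflexive e -> irreflexive (eB e1 e).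
Proof. by move=> I1 I [x|x] /=. Qed.

Lemma mixing (R : realType) (x g h : @fsum R) :
  inF0 x -> inF0 g -> inF0 h -> positive g -> positive h -> inK (subF (mulF g x) h) ->
  forall (T1 : finType) (e1 : rel T1), symmetric e1 -> irreflexive e1 -> (0 < #|T1|)%N ->
  Defs.tval x e1 < 0 ->
  forall (T : finType) (e : rel T), symmetric e -> irreflexive e -> (0 < #|T|)%N ->
  Defs.tval g e = 0.
Proof.
move=> Ix Ig Ih Pg Ph HK T1 e1 S1 I1 T10 Hx T e S I T0.
pose K := Kmax (x ++ g).
have Kx : forall p, List.In p x -> (nv p.2 <= K)%N.
  by move=> p Hp; apply: Kmax_ge; apply/In_cat; left.
have Kg : forall p, List.In p g -> (nv p.2 <= K)%N.
  by move=> p Hp; apply: Kmax_ge; apply/In_cat; right.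
pose Qx := Qp e1 e x K; pose Qg := Qp e1 e g K.
have n1pos : (0 : R) < #|T1|%:R ^+ K by rewrite exprn_gt0 // ltr0n.
have QxK : Qx`_K < 0 by rewrite /Qx Qp_coefK // pmulr_rlt0.
have Qxsize : size Qx = K.+1.
  apply/eqP; rewrite eqn_leq Qp_size //=; apply: contraT; rewrite -leqNgt => Hs.
  by move: QxK; rewrite nth_default // ltxx.
have lead : lead_coef (- Qx) > 0 by rewrite lead_coefN lead_coefE Qxsize /= oppr_gt0.
have [n0 Hn0] := poly_pinfty_gt_lc lead.
pose A0 := Num.Def.archi_bound `|n0|.
have HA0 : forall a, (A0 <= a)%N -> n0 <= a%:R.
  move=> a Ha; apply: le_trans (ler_norm n0) _; apply: ltW.
  apply: lt_le_trans (archi_boundP (normr_ge0 n0)) _; by rewrite ler_nat.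
have Gsym : forall a, symmetric (@ea T1 T e1 e a).
  by move=> a u v; rewrite /ea (eB_sym S1 S).
have Girr : forall a, irreflexive (@ea T1 T e1 e a).
  by move=> a u; rewrite /ea (eB_irr I1 I).
have Gne : forall a, (0 < #|{: ((T1 * 'I_a) + T)%type}|)%N.
  by move=> a; rewrite card_sum; apply: leq_trans T0 _; rewrite leq_addl.
have Npos : forall a, (0 : R) < (#|T1| * a + #|T|)%:R ^+ K.
  by move=> a; rewrite exprn_gt0 // ltr0n; apply: leq_trans T0 _; rewrite leq_addl.
have Qg0 : forall a, (A0 <= a)%N -> Qg.[a%:R] = 0.
  move=> a Ha.
  have Hxa : Defs.tval x (@ea T1 T e1 e a) < 0.
    have := Hn0 _ (HA0 a Ha); rewrite hornerN (Qp_horner e1 e T0 a Kx) => Hle.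
    have : 0 < - ((#|T1| * a + #|T|)%:R ^+ K * Defs.tval x (@ea T1 T e1 e a)) by apply: lt_le_trans lead Hle.
    by rewrite oppr_gt0 pmulr_rlt0.
  have Hga := Pg _ _ (Gsym a) (Girr a) (Gne a).
  have Hha := Ph _ _ (Gsym a) (Girr a) (Gne a).
  have Hid := prod_identity Ix Ig Ih HK (@ea T1 T e1 e a) (Gne a).
  have Hg0 : Defs.tval g (@ea T1 T e1 e a) = 0.
    apply/eqP; rewrite eq_le Hga andbT; apply: contraT; rewrite -ltNge => Hgt.
    by move: Hha; rewrite -Hid leNgt pmulr_rlt0 // Hxa.
  by rewrite /Qg (Qp_horner e1 e T0 a Kg) Hg0 mulr0.
have QgE : Qg = 0.
  apply: contraTeq isT => Hnz.
  pose rs := [seq ((A0 + i)%N%:R : R) | i <- iota 0 (size Qg)].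
  have := max_poly_roots Hnz (rs := rs).
  rewrite size_map size_iota ltnn; apply.
    apply/allP => y /mapP [i _ ->]; rewrite /root Qg0 //; exact: leq_addr.
  rewrite map_inj_uniq ?iota_uniq // => i j /eqP; rewrite eqr_nat eqn_add2l => /eqP //.
have := Qp_coef0 e1 e T0 Kg; rewrite -/Qg QgE coef0 => /esym /eqP.
rewrite mulf_eq0 expf_eq0 pnatr_eq0 (negbTE (lt0n_neq0 T0)) andbF /= => /eqP -> //.
Qed.

Definition ecount (H : plg) : nat :=
  #|[set uv : 'I_(nv H) * 'I_(nv H) | edgeb H uv.1 uv.2]|.

Lemma surj_inj (n : nat) (f : {ffun 'I_n -> 'I_n}) : surjb f -> injective f.
Proof.
move=> /forallP Hs.
have : #|[seq f x | x in 'I_n]| == #|'I_n|.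
  apply/eqP; apply: eq_card => y; rewrite !inE.
  have /existsP [x /eqP <-] := Hs y; by rewrite image_f.
move/image_injP => Hinj x y Exy; exact: Hinj.
Qed.

Lemma bij_ecount (H F : plg) (f : {ffun 'I_(nv H) -> 'I_(nv F)}) :
  nv H = nv F -> unlabeled H -> unlabeled F ->
  homb (fun a b : 'I_(nv F) => edgeb F a b) f -> surjb f ->
  (ecount H <= ecount F)%N /\ (ecount H = ecount F -> isob H F).
Proof.
case: H f => [m a' l'] /=; case: F => [n a l] /= f E; subst m => UH UF Hh Hs.
set H := PLG n a' l' in UH Hh *; set F := PLG n a l in UF Hh *.
have finj := surj_inj Hs.
pose gg (uv : 'I_n * 'I_n) := (f uv.1, f uv.2).
have ginj : injective gg by move=> [u v] [u' v'] [/finj -> /finj ->].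
have Hsub : gg @: [set uv : 'I_n * 'I_n | edgeb H uv.1 uv.2] \subset
            [set uv : 'I_n * 'I_n | edgeb F uv.1 uv.2].
  apply/subsetP => z /imsetP [[u v]]; rewrite inE /= => Huv ->; rewrite inE /=.
  exact: (implyP (forallP (forallP Hh u) v) Huv).
have Hc := card_imset [set uv : 'I_n * 'I_n | edgeb H uv.1 uv.2] ginj.
split; first by rewrite /ecount -Hc; apply: subset_leq_card.
move=> Ec.
have Eset : gg @: [set uv : 'I_n * 'I_n | edgeb H uv.1 uv.2] = [set uv : 'I_n * 'I_n | edgeb F uv.1 uv.2].
  by apply/eqP; rewrite eqEcard Hsub /= Hc; move: Ec; rewrite /ecount => ->.
apply/andP; split => //; apply/existsP; exists (perm finj); apply/forallP => u.
have UH' : forall u : 'I_n, l' u = None := fun u => UH u (ltn_ord u).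
have UF' : forall u : 'I_n, l u = None := fun u => UF u (ltn_ord u).
rewrite permE /= UH' UF' eqxx /=; apply/forallP => v; rewrite permE.
apply/eqP; apply/idP/idP => Hfe.
  have : (f u, f v) \in gg @: [set uv : 'I_n * 'I_n | edgeb H uv.1 uv.2] by rewrite Eset inE.
  by case/imsetP => [[u' v']]; rewrite inE /= => Hu' [/finj Eu /finj Ev]; rewrite Eu Ev.
exact: (implyP (forallP (forallP Hh u) v) Hfe).
Qed.

Section IE.
Variables (R : realType) (n : nat).

Definition Wc (chi : {ffun 'I_n -> bool}) : R := \prod_(i : 'I_n) (if chi i then 1 else -1).

Lemma IEf (m : nat) (f : {ffun 'I_m -> 'I_n}) :
  \sum_(chi : {ffun 'I_n -> bool}) Wc chi * ([forall u, chi (f u)] : nat)%:R = (surjb f : nat)%:R.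
Proof.
pose w (i : 'I_n) (b : bool) : R := if b then 1 else if [exists u, f u == i] then 0 else -1.
transitivity (\sum_(chi : {ffun 'I_n -> bool}) \prod_(i : 'I_n) w i (chi i)).
  apply: eq_bigr => chi _; rewrite /Wc.
  case: (boolP [forall u, chi (f u)]) => Hall /=.
    rewrite mulr1; apply: eq_bigr => i _; rewrite /w; case Hc: (chi i) => //.
    case: (boolP [exists u, f u == i]) => // /existsP [u /eqP Eu].
    by move: Hc; rewrite -Eu (forallP Hall u).
  rewrite mulr0; have /forallPn [u Hu] := Hall.
  rewrite (bigD1 (f u)) //= /w (negbTE Hu).
  have -> : [exists u0, f u0 == f u] by apply/existsP; exists u.
  by rewrite mul0r.
rewrite -bigA_distr_bigA /=.
transitivity (\prod_(i : 'I_n) ([exists u, f u == i] : nat)%:R : R).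
  apply: eq_bigr => i _; rewrite big_bool /w /=.
  by case: [exists u, f u == i]; rewrite /= ?addr0 ?subrr.
case: (boolP (surjb f)) => Hs /=.
  by apply: big1 => i _; rewrite (forallP Hs i).
have /forallPn [i Hi] := Hs.
by rewrite (bigD1 i) //= (negbTE Hi) mul0r.
Qed.

Variable eF : rel 'I_n.

Definition cchi (H : plg) (chi : {ffun 'I_n -> bool}) : nat :=
  #|[pred f : {ffun 'I_(nv H) -> 'I_n} | homb eF f && [forall u, chi (f u)]]|.

Lemma IE (H : plg) :
  \sum_(chi : {ffun 'I_n -> bool}) Wc chi * (cchi H chi)%:R = (homcS H eF true)%:R.
Proof.
have Hc : forall chi, (cchi H chi)%:R =
    \sum_(f : {ffun 'I_(nv H) -> 'I_n} | homb eF f) ([forall u, chi (f u)] : nat)%:R :> R.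
  by move=> chi; rewrite -natr_sum sum_bool_card.
have -> : (homcS H eF true)%:R =
    \sum_(f : {ffun 'I_(nv H) -> 'I_n} | homb eF f) (surjb f : nat)%:R :> R.
  by rewrite -natr_sum sum_bool_card.
under eq_bigr do rewrite Hc mulr_sumr.
rewrite exchange_big /=; apply: eq_bigr => f _.
exact: IEf.
Qed.

End IE.

Lemma edgeb_sym H : symmetric (edgeb H).
Proof. by move=> u v; rewrite /edgeb eq_sym orbC; case: (u < nv H)%N; case: (v < nv H)%N. Qed.

Lemma edgeb_irr H : irreflexive (edgeb H).
Proof. by move=> u; rewrite /edgeb eqxx !andbF. Qed.

Lemma coef_isob (R : realType) (s : @fsum R) H J : isob H J -> coef s H = coef s J.
Proof.
move=> HJ; apply: eq_bigl => r; apply/idP/idP => Hr.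
  exact: isob_trans Hr HJ.
exact: isob_trans Hr (isob_sym HJ).
Qed.

Lemma has_In (I : Type) (P : pred I) s : has P s -> exists x, List.In x s /\ P x.
Proof.
elim: s => [|y s IH] //= /orP [Hy|Hs]; first by exists y; split; [left|].
by have [x [Hx Px]] := IH Hs; exists x; split; [right|].
Qed.

Lemma lovasz (R : realType) (s : @fsum R) N : (0 < N)%N ->
  (forall p, List.In p s -> unlabeled p.2 /\ nv p.2 = N) ->
  (forall (T : finType) (e : rel T), symmetric e -> irreflexive e -> (0 < #|T|)%N ->
     \sum_(p <- s) p.1 * (homc p.2 e)%:R = 0) ->
  forall J, wf J -> coef s J = 0.
Proof.
move=> N0 Hs Hz.
have Key : forall k p, List.In p s -> ecount p.2 = k -> coef s p.2 = 0.
  elim/ltn_ind => k IH p Hp Ek.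
  set F := p.2.
  pose eF := fun a b : 'I_(nv F) => edgeb F a b.
  pose phi := fun H => (homcS H eF true)%:R : R.
  have Hphi : forall H J, isob H J -> phi H = phi J.
    by move=> H J HJ; rewrite /phi (isob_homcS _ _ HJ).
  have Hchi : forall chi : {ffun 'I_(nv F) -> bool},
      \sum_(q <- s) q.1 * (cchi eF q.2 chi)%:R = 0.
    move=> chi; case: (boolP [exists y, chi y]) => [/existsP [y0 Hy0]|Hno].
      pose T' : finType := {y : 'I_(nv F) | chi y}.
      pose e' := fun a b : T' => edgeb F (val a) (val b).
      have S' : symmetric e' by move=> a b; rewrite /e' edgeb_sym.
      have I' : irreflexive e' by move=> a; rewrite /e' edgeb_irr.
      have T'0 : (0 < #|T'|)%N by apply/card_gt0P; exists (exist _ y0 Hy0).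
      transitivity (\sum_(q <- s) q.1 * (homc q.2 e')%:R); last exact: Hz T' e' S' I' T'0.
      apply: big_In => q Hq; congr (_ * _%:R).
      apply: (@homc_embed q.2 T' _ e' eF val (fun y => chi y)) => //.
      - exact: val_inj.
      - by move=> [y Hy].
      - by move=> y Hy; exists (exist _ y Hy).
    transitivity (\sum_(q <- s) (0:R)); last by rewrite big1.
    apply: big_In => q Hq; rewrite /cchi.
    have Hn : (0 < nv q.2)%N by rewrite (Hs q Hq).2.
    rewrite eq_card0 ?mulr0 // => f; rewrite !inE.
    apply/negbTE; apply/negP => /andP [_ /forallP /(_ (Ordinal Hn)) Hc].
    by move/existsPn: Hno => /(_ (f (Ordinal Hn))); rewrite Hc.
  have Hsum : \sum_(q <- s) q.1 * phi q.2 = 0.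
    transitivity (\sum_(chi : {ffun 'I_(nv F) -> bool})
        Wc R chi * \sum_(q <- s) q.1 * (cchi eF q.2 chi)%:R); last first.
      by rewrite big1 // => chi _; rewrite Hchi mulr0.
    rewrite /phi.
    under eq_bigr do rewrite -(IE R eF) mulr_sumr.
    rewrite exchange_big /=; apply: eq_bigr => chi _; rewrite mulr_sumr.
    by apply: eq_bigr => q _; rewrite mulrCA.
  rewrite (group Hphi (s := s) (S := s)) // in Hsum.
  have Hterm : forall q, List.In q s -> coef s q.2 * phi q.2 / (cnt s q.2)%:R =
      if isob q.2 F then coef s F * phi F / (cnt s F)%:R else 0.
    move=> q Hq; case: ifP => Hi.
      by rewrite (coef_isob s Hi) (Hphi _ _ Hi) -(cnt_eq s Hi).
    case: (eqVneq (phi q.2) 0) => [->|Hnz]; first by rewrite mulr0 mul0r.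
    have : (0 < homcS q.2 eF true)%N by rewrite lt0n; move: Hnz; rewrite /phi pnatr_eq0.
    move/card_gt0P => [f]; rewrite inE => /andP [Hhom Hsur].
    have Enn : nv q.2 = nv F by rewrite (Hs q Hq).2 (Hs p Hp).2.
    have [Hle Heq] := bij_ecount Enn (Hs q Hq).1 (Hs p Hp).1 Hhom Hsur.
    have Hlt : (ecount q.2 < k)%N.
      rewrite -Ek ltn_neqAle Hle andbT; apply/negP => /eqP /Heq.
      by rewrite Hi.
    by rewrite (IH _ Hlt q Hq erefl) !mul0r.
  rewrite (big_In Hterm) sum_if_const in Hsum.
  have cnt0 : (cnt s F)%:R != 0 :> R.
    by rewrite pnatr_eq0 -lt0n; apply: (count_In_pos Hp); exact: isob_refl.
  have phiF : phi F != 0.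
    rewrite /phi pnatr_eq0 -lt0n; apply/card_gt0P; exists [ffun u => u]; rewrite inE /=.
    apply/andP; split.
      by apply/forallP => u; apply/forallP => v; rewrite !ffunE; apply/implyP.
    by apply/forallP => y; apply/existsP; exists y; rewrite ffunE.
  move: Hsum; rewrite -/(cnt s F) mulfVK // => /eqP; rewrite mulf_eq0 (negbTE phiF) orbF.
  by move/eqP.
move=> J WJ; case Hh: (has (fun q : R * plg => isob q.2 J) s).
  have [q [Hq Hqj]] := has_In Hh.
  by rewrite -(coef_isob s Hqj); exact: Key _ q Hq erefl.
by rewrite /coef big_hasC // Hh.
Qed.

Definition padn (k : nat) (F : plg) : plg := iter k (fun H => gmul H (vtx None)) F.

Lemma newv_None H u : newv H (vtx None) u.
Proof. by []. Qed.

Lemma padn_unl k F : unlabeled F -> unlabeled (padn k F).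
Proof. by move=> U; elim: k => [|k IH] //; apply: gmul_unl. Qed.

Lemma padn_nv k F : nv (padn k F) = (nv F + k)%N.
Proof.
elim: k => [|k IH]; first by rewrite addn0.
change (nv (gmul (padn k F) (vtx None)) = (nv F + k.+1)%N).
by rewrite (gmul_nv (H2 := vtx None)) // IH addn1 addnS.
Qed.

Lemma padn_tdens (R : realType) k F (T : finType) (e : rel T) : (0 < #|T|)%N ->
  @tdens R (padn k F) T e = @tdens R F T e.
Proof.
move=> T0; elim: k => [|k IH] //.
change (@tdens R (gmul (padn k F) (vtx None)) T e = @tdens R F T e).
by rewrite (@tdens_gen R _ None T e T0).1 IH.
Qed.

Definition ind (R : realType) (H J : plg) : R := if isob H J then 1 else 0.

Lemma coefE' (R : realType) (s : @fsum R) J : coef s J = \sum_(p <- s) p.1 * ind R p.2 J.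
Proof.
rewrite /coef big_mkcond; apply: eq_bigr => p _; rewrite /ind; case: ifP => _.
  by rewrite mulr1. by rewrite mulr0.
Qed.

Lemma coef_cat (R : realType) (s1 s2 : @fsum R) J : coef (s1 ++ s2) J = coef s1 J + coef s2 J.
Proof. by rewrite /coef big_cat. Qed.

Lemma coef_genexpr (R : realType) (gens : seq (R * plg * option nat)) J :
  coef (genexpr gens) J = \sum_(q <- gens) q.1.1 * (ind R (gmul q.1.2 (vtx q.2)) J - ind R q.1.2 J).
Proof.
elim: gens => [|q gens IH]; first by rewrite /coef !big_nil.
rewrite genexpr_cons coef_cat IH coefE' big_cons !big_cons big_nil /=.
have -> : ind R (gmul q.1.2 g0) J = ind R q.1.2 J.
  rewrite /ind; case: ifP => H1; case: ifP => H2 //.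
    by move: H2; rewrite (isob_trans (isob_sym (gmul_g0_isob q.1.2)) H1).
  by move: H1; rewrite (isob_trans (gmul_g0_isob q.1.2) H2).
congr (_ + _); rewrite addr0 !mulr1; ring.
Qed.



Lemma faithful (R : realType) (g : @fsum R) : inF0 g ->
  (forall (T : finType) (e : rel T), symmetric e -> irreflexive e -> (0 < #|T|)%N ->
     Defs.tval g e = 0) -> inK g.
Proof.
move=> Ig Hz.
pose N := (Kmax g).+1.
pose d (p : R * plg) := (N - nv p.2)%N.
pose g' := [seq (p.1, padn (d p) p.2) | p <- g].
have Hg' : forall p, List.In p g' -> unlabeled p.2 /\ nv p.2 = N.
  move=> p /(List.in_map_iff _ _ _) [q [<- Hq]] /=; split.
    by apply: padn_unl; exact: (Ig _ Hq).2.
  by rewrite padn_nv subnKC // ltnW // ltnS Kmax_ge.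
have Hz' : forall (T : finType) (e : rel T), symmetric e -> irreflexive e -> (0 < #|T|)%N ->
     \sum_(p <- g') p.1 * (homc p.2 e)%:R = 0.
  move=> T e S I T0.
  have : Defs.tval g' e = 0.
    rewrite -(Hz T e S I T0) /Defs.tval big_map; apply: eq_bigr => p _ /=.
    by rewrite padn_tdens.
  rewrite /Defs.tval.
  have -> : \sum_(p <- g') p.1 * tdens p.2 e = (\sum_(p <- g') p.1 * (homc p.2 e)%:R) / (#|T| ^ N)%:R.
    rewrite mulr_suml; apply: big_In => p Hp; rewrite tdensE (Hg' p Hp).2; by rewrite mulrA.
  move/eqP; rewrite mulf_eq0 invr_eq0 pnatr_eq0 expn_eq0 (negbTE (lt0n_neq0 T0)) andFb orbF.
  by move/eqP.
have C0 := lovasz (ltn0Sn _) Hg' Hz'.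
pose gens := flatten [seq [seq (- p.1, padn j p.2, @None nat) | j <- iota 0 (d p)] | p <- g].
exists gens; split.
  move=> q; rewrite /gens => /List.in_flat_map [l [/(List.in_map_iff _ _ _) [p [<- Hp]] Hq]].
  move: Hq => /(List.in_map_iff _ _ _) [j [<- _]] /=; split; last by apply: unl_wf.
  by apply: unl_wf; apply: padn_unl; exact: (Ig _ Hp).2.
move=> J WJ; rewrite coef_genexpr /gens big_flatten /= big_map.
transitivity (coef g J - coef g' J); first by rewrite C0 // subr0.
rewrite !coefE' /g' big_map -sumrB; apply: eq_bigr => p _ /=.
rewrite big_map /=.
have -> : iota 0 (d p) = index_iota 0 (d p) by rewrite /index_iota subn0.
rewrite -mulr_sumr.
rewrite (telescope_sumr (fun j => ind R (padn j p.2) J)) //=.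
ring.
Qed.

Theorem lemma2p3 (R : realType) (x g h : @fsum R) :
  inF0 x -> inF0 g -> inF0 h ->
  positive g -> positive h ->
  ~ inK g ->
  inK (subF (mulF g x) h) ->
  positive x.
Proof.
move=> Ix Ig Ih Pg Ph NK HK T1 e1 S1 I1 T10.
case: (lerP 0 (Defs.tval x e1)) => // Hneg.
exfalso; apply: NK; apply: (faithful Ig) => T e S I T0.
exact: (mixing Ix Ig Ih Pg Ph HK S1 I1 T10 Hneg S I T0).
Qed.
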